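(* Let $X\subset\mathbb{R}^2$ be a finite set of at least two distinct points. Then $$\lim_{k\to\infty}\frac{\ell^k_{\mathrm{MSTH}}(X)}{\ell^k_{\mathrm{OPT}}(X)}=\frac{L_{\mathrm{MST}}(X)}{L_{\mathrm{SMT}}(X)}.$$
   Context: All lengths are Euclidean. For a tree $T$ embedded in the plane, $\ell_{\max}(T)$ is the length of its longest edge. For a positive integer $k$, $\mathcal{C}(X,k)$ is the set of all trees whose vertex set is $X\cup S$ for some set $S\subset\mathbb{R}^2$ of at most $k$ additional points. $\ell^k_{\mathrm{OPT}}(X)=\inf\{\ell_{\max}(T): T\in\mathcal{C}(X,k)\}$ is the optimal bottleneck length. Let $e_1,\dots,e_{n-1}$ be the edges of a Euclidean minimum spanning tree on $X$ (the multiset of edge lengths does not depend on the choice of MST). The minimum spanning tree heuristic (MSTH) places $k$ degree-two Steiner points (''beads'') on these edges, $n_i\ge 0$ equally spaced beads on $e_i$ with $\sum_i n_i=k$, chosen so as to minimise the longest resulting edge; thus $\ell^k_{\mathrm{MSTH}}(X)=\min\{\max_i |e_i|/(n_i+1): n_i\in\mathbb{Z}_{\ge0},\ \sum_i n_i=k\}$. $L_{\mathrm{MST}}(X)$ is the total length of a minimum spanning tree on $X$, and $L_{\mathrm{SMT}}(X)$ is the total length of a Steiner minimal tree on $X$, i.e. the infimum of total edge length over all trees whose vertex set contains $X$ together with any finite number of additional points of the plane. *)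

(* Defs.v *)
From Stdlib Require Import Reals Lra List ClassicalEpsilon.
Import ListNotations.
Open Scope R_scope.

Definition pt := (R * R)%type.

Definition dist (p q : pt) : R :=
  sqrt ((fst p - fst q) ^ 2 + (snd p - snd q) ^ 2).

Definition edge_len (e : pt * pt) : R := dist (fst e) (snd e).

Inductive reach (E : list (pt * pt)) : pt -> pt -> Prop :=
| reach_refl u : reach E u u
| reach_step u v w : reach E u v -> (In (v, w) E \/ In (w, v) E) -> reach E u w.

(* (V, E) is a tree with vertex set V (listed without repetition):
   edges join vertices of V, the graph is connected, and |E| = |V| - 1.
   (A connected graph with |V|-1 edges has no loops/multi-edges/cycles.) *)
Definition is_tree (V : list pt) (E : list (pt * pt)) : Prop :=
  NoDup V /\ V <> [] /\
  (forall e, In e E -> In (fst e) V /\ In (snd e) V) /\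
  length E = (length V - 1)%nat /\
  (forall u v, In u V -> In v V -> reach E u v).

Definition total_length (E : list (pt * pt)) : R :=
  fold_right Rplus 0 (map edge_len E).

Definition max_edge (E : list (pt * pt)) : R :=
  fold_right Rmax 0 (map edge_len E).

Definition is_glb (S : R -> Prop) (m : R) : Prop :=
  (forall x, S x -> m <= x) /\ (forall m', (forall x, S x -> m' <= x) -> m' <= m).

Definition Rinf (S : R -> Prop) : R :=
  epsilon (inhabits 0) (fun m => is_glb S m).

(* T = (V,E) in C(X,k): vertex set X ∪ S with |S| <= k *)
Definition in_C (X : list pt) (k : nat) (V : list pt) (E : list (pt * pt)) : Prop :=
  is_tree V E /\ incl X V /\ (length V <= length X + k)%nat.

Definition ell_opt (X : list pt) (k : nat) : R :=
  Rinf (fun r => exists V E, in_C X k V E /\ r = max_edge E).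

Definition is_MST (X : list pt) (E : list (pt * pt)) : Prop :=
  is_tree X E /\ (forall E', is_tree X E' -> total_length E <= total_length E').

Definition L_MST (X : list pt) : R :=
  Rinf (fun L => exists E, is_tree X E /\ L = total_length E).

Definition L_SMT (X : list pt) : R :=
  Rinf (fun L => exists V E, is_tree V E /\ incl X V /\ L = total_length E).

(* MSTH with respect to the MST edge list E: ns gives n_i beads on e_i *)
Definition ell_msth (E : list (pt * pt)) (k : nat) : R :=
  Rinf (fun r => exists ns : list nat,
          length ns = length E /\ list_sum ns = k /\
          r = fold_right Rmax 0
                (map (fun p => edge_len (fst p) / INR (snd p + 1)) (combine E ns))).

(* Main.v *)
Require Import Defs.
From Stdlib Require Import Reals List.
From Stdlib Require Import Lra Lia Psatz Classical ClassicalEpsilon ZArith.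
Import ListNotations.
Open Scope R_scope.
Local Notation dist := Defs.dist.

Lemma reach_trans E a b c : reach E a b -> reach E b c -> reach E a c.
Proof. intros H1 H2; induction H2 as [|u v w H IH Hin]; auto. exact (reach_step E a v w (IH H1) Hin). Qed.

Lemma reach_edge E u v : In (u,v) E \/ In (v,u) E -> reach E u v.
Proof. intros H; eapply reach_step; [apply reach_refl|exact H]. Qed.

Lemma reach_sym E a b : reach E a b -> reach E b a.
Proof.
  intros H; induction H. apply reach_refl.
  eapply reach_trans; [|exact IHreach]. apply reach_edge. tauto.
Qed.

Lemma reach_mono E E' a b :
  (forall x y, In (x,y) E -> reach E' x y) -> reach E a b -> reach E' a b.
Proof.
  intros HE H; induction H. apply reach_refl.
  eapply reach_trans; [exact IHreach|]. destruct H0 as [H0|H0].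
  apply HE; auto. apply reach_sym, HE; auto.
Qed.

Lemma pd_nonneg p q : 0 <= dist p q.
Proof. unfold dist; apply sqrt_pos. Qed.

Lemma pd_sym p q : dist p q = dist q p.
Proof. unfold dist; f_equal; ring. Qed.

Lemma pd_pos p q : p <> q -> 0 < dist p q.
Proof.
  intros H; destruct p as [a b], q as [c d]; unfold dist; simpl.
  apply sqrt_lt_R0.
  destruct (Req_dec a c); destruct (Req_dec b d).
  - subst; congruence.
  - assert (0 < (b-d)^2) by (simpl; assert (b - d <> 0) by lra; nra).
    assert (0 <= (a-c)^2) by (simpl; nra). lra.
  - assert (0 < (a-c)^2) by (simpl; assert (a - c <> 0) by lra; nra).
    assert (0 <= (b-d)^2) by (simpl; nra). lra.
  - assert (0 < (a-c)^2) by (simpl; assert (a - c <> 0) by lra; nra).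
    assert (0 <= (b-d)^2) by (simpl; nra). lra.
Qed.

Lemma cs a b c d sa sb : 0 <= sa -> 0 <= sb -> sa*sa = a*a+c*c -> sb*sb = b*b+d*d ->
  a*b + c*d <= sa*sb.
Proof.
  intros. destruct (Rle_dec (a*b+c*d) 0). { pose proof (Rmult_le_pos _ _ H H0). lra. }
  assert ((a*b+c*d)*(a*b+c*d) <= (sa*sb)*(sa*sb)).
  { replace ((sa*sb)*(sa*sb)) with ((sa*sa)*(sb*sb)) by ring. rewrite H1, H2.
    pose proof (Rle_0_sqr (a*d-b*c)) as Q; unfold Rsqr in Q. nra. }
  pose proof (Rmult_le_pos _ _ H H0).
  destruct (Rle_dec (a*b+c*d) (sa*sb)); auto.
  assert ((sa*sb)*(sa*sb) < (a*b+c*d)*(a*b+c*d)).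
  { apply Rmult_le_0_lt_compat; lra. }
  lra.
Qed.

Lemma tri_aux a b c d :
  sqrt ((a+b)*(a+b)+(c+d)*(c+d)) <= sqrt (a*a+c*c) + sqrt (b*b+d*d).
Proof.
  assert (Ha : 0 <= a*a+c*c) by nra. assert (Hb : 0 <= b*b+d*d) by nra.
  pose proof (sqrt_pos (a*a+c*c)) as P1. pose proof (sqrt_pos (b*b+d*d)) as P2.
  pose proof (sqrt_sqrt _ Ha) as S1. pose proof (sqrt_sqrt _ Hb) as S2.
  pose proof (cs a b c d _ _ P1 P2 S1 S2).
  rewrite <- (sqrt_square (sqrt (a*a+c*c) + sqrt (b*b+d*d))) by lra.
  apply sqrt_le_1_alt. nra.
Qed.

Lemma pd_tri x y z : dist x z <= dist x y + dist y z.
Proof.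
  destruct x as [x1 x2], y as [y1 y2], z as [z1 z2]; unfold dist; cbn [fst snd].
  pose proof (tri_aux (x1-y1) (y1-z1) (x2-y2) (y2-z2)) as H.
  replace ((x1 - z1)^2 + (x2 - z2)^2) with ((x1 - y1 + (y1 - z1)) * (x1 - y1 + (y1 - z1)) +
        (x2 - y2 + (y2 - z2)) * (x2 - y2 + (y2 - z2))) by ring.
  replace ((x1 - y1)^2 + (x2 - y2)^2) with ((x1 - y1) * (x1 - y1) + (x2 - y2) * (x2 - y2)) by ring.
  replace ((y1 - z1)^2 + (y2 - z2)^2) with ((y1 - z1) * (y1 - z1) + (y2 - z2) * (y2 - z2)) by ring.
  exact H.
Qed.

Lemma glb_exists (S : R -> Prop) :
  (exists x, S x) -> (forall x, S x -> 0 <= x) -> exists m, is_glb S m.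
Proof.
  intros [x Hx] Hlb.
  destruct (completeness (fun y => S (- y))) as [M [HM1 HM2]].
  - exists 0. intros y Hy. apply Hlb in Hy. lra.
  - exists (-x). rewrite Ropp_involutive. auto.
  - exists (-M). split.
    + intros z Hz. assert (-z <= M) by (apply HM1; rewrite Ropp_involutive; auto). lra.
    + intros m' Hm'. assert (M <= - m'). { apply HM2. intros y Hy. apply Hm' in Hy. lra. } lra.
Qed.

Lemma Rinf_glb (S : R -> Prop) :
  (exists x, S x) -> (forall x, S x -> 0 <= x) -> is_glb S (Rinf S).
Proof.
  intros H1 H2. unfold Rinf. apply epsilon_spec. apply glb_exists; auto.
Qed.

Lemma Rinf_le (S : R -> Prop) x :
  (forall x, S x -> 0 <= x) -> S x -> Rinf S <= x.
Proof. intros H Hx. apply (Rinf_glb S); eauto. Qed.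

Lemma Rinf_ge (S : R -> Prop) m :
  (exists x, S x) -> (forall x, S x -> 0 <= x) -> (forall x, S x -> m <= x) -> m <= Rinf S.
Proof. intros H1 H2 H3. apply (Rinf_glb S); auto. Qed.

Lemma Rinf_approx (S : R -> Prop) eps :
  (exists x, S x) -> (forall x, S x -> 0 <= x) -> 0 < eps -> exists x, S x /\ x < Rinf S + eps.
Proof.
  intros H1 H2 He. destruct (Rinf_glb S H1 H2) as [G1 G2].
  apply NNPP; intro Hn.
  assert (Rinf S + eps <= Rinf S); [|lra].
  apply G2. intros x Hx. apply Rnot_lt_le. intro. apply Hn. eauto.
Qed.

Lemma nat_floor x : 0 <= x -> exists n : nat, INR n <= x < INR n + 1.
Proof.
  intros Hx. destruct (archimed x) as [H1 H2].
  assert (Hz : (0 < up x)%Z) by (apply lt_IZR; lra).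
  exists (Z.to_nat (up x - 1)).
  rewrite INR_IZR_INZ, Z2Nat.id by lia. rewrite minus_IZR. simpl. lra.
Qed.

Definition lerp (u v : pt) (t : R) : pt :=
  (fst u + t*(fst v - fst u), snd u + t*(snd v - snd u)).

Lemma dist_lerp1 u v t : dist u (lerp u v t) = Rabs t * dist u v.
Proof.
  unfold dist, lerp; cbn [fst snd].
  replace ((fst u - (fst u + t * (fst v - fst u))) ^ 2 + (snd u - (snd u + t * (snd v - snd u))) ^ 2)
    with (t*t * ((fst u - fst v) ^ 2 + (snd u - snd v) ^ 2)) by ring.
  rewrite sqrt_mult_alt by apply Rle_0_sqr. f_equal. rewrite <- sqrt_Rsqr_abs. reflexivity.
Qed.

Lemma dist_lerp2 u v t : dist (lerp u v t) v = Rabs (1 - t) * dist u v.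
Proof.
  unfold dist, lerp; cbn [fst snd].
  replace ((fst u + t * (fst v - fst u) - fst v) ^ 2 + (snd u + t * (snd v - snd u) - snd v) ^ 2)
    with ((1-t)*(1-t) * ((fst u - fst v) ^ 2 + (snd u - snd v) ^ 2)) by ring.
  rewrite sqrt_mult_alt by apply Rle_0_sqr. f_equal. rewrite <- sqrt_Rsqr_abs. reflexivity.
Qed.

Lemma lerp_inj u v t s : u <> v -> lerp u v t = lerp u v s -> t = s.
Proof.
  intros Huv H. unfold lerp in H. injection H as H1 H2.
  destruct u as [u1 u2], v as [v1 v2]; cbn [fst snd] in *.
  destruct (Req_dec v1 u1).
  - destruct (Req_dec v2 u2). subst; congruence.
    apply Rmult_eq_reg_r with (v2 - u2); lra.
  - apply Rmult_eq_reg_r with (v1 - u1); lra.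
Qed.

Lemma avoid u v (V : list pt) : u <> v -> forall a b, a < b ->
  exists t, a < t < b /\ ~ In (lerp u v t) V.
Proof.
  intros Huv. induction V as [|q V IH]; intros a b Hab.
  - exists ((a+b)/2). split; [lra|simpl; tauto].
  - destruct (classic (exists t0, lerp u v t0 = q)) as [[t0 Ht0]|Hn].
    + destruct (Rlt_dec a t0) as [Ha|Ha]; [destruct (Rlt_dec t0 b) as [Hb|Hb]|].
      * destruct (IH a t0 Ha) as [t [Ht Hn]]. exists t. split; [lra|].
        simpl. intros [E|E]; [|tauto]. rewrite <- Ht0 in E. apply lerp_inj in E; auto. lra.
      * destruct (IH a b Hab) as [t [Ht Hn]]. exists t. split; [lra|].
        simpl. intros [E|E]; [|tauto]. rewrite <- Ht0 in E. apply lerp_inj in E; auto. lra.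
      * destruct (IH a b Hab) as [t [Ht Hn]]. exists t. split; [lra|].
        simpl. intros [E|E]; [|tauto]. rewrite <- Ht0 in E. apply lerp_inj in E; auto. lra.
    + destruct (IH a b Hab) as [t [Ht Hn']]. exists t. split; [lra|].
      simpl. intros [E|E]; [|tauto]. apply Hn. eauto.
Qed.

Lemma split_tree V E1 E2 u v p :
  is_tree V (E1 ++ (u,v)::E2) -> ~ In p V -> is_tree (p::V) (E1 ++ (u,p)::(p,v)::E2).
Proof.
  intros [ND [NE [Hin [Hlen Hc]]]] Hp.
  assert (Hu : In u V /\ In v V) by (apply (Hin (u,v)); apply in_or_app; simpl; auto).
  set (E' := E1 ++ (u,p)::(p,v)::E2).
  assert (Hmono : forall a b, reach (E1 ++ (u,v)::E2) a b -> reach E' a b).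
  { intros a b. apply reach_mono. intros x y Hxy.
    apply in_app_iff in Hxy. destruct Hxy as [H|[H|H]].
    - apply reach_edge; left; unfold E'; apply in_or_app; auto.
    - injection H as <- <-. apply reach_trans with p; apply reach_edge; left;
        unfold E'; apply in_or_app; simpl; auto.
    - apply reach_edge; left; unfold E'; apply in_or_app; simpl; auto. }
  assert (Hto : forall a, In a (p::V) -> reach E' a u).
  { intros a [<-|Ha].
    - apply reach_edge; right; unfold E'; apply in_or_app; simpl; auto.
    - apply Hmono, Hc; tauto. }
  split; [constructor; auto|]. split; [discriminate|]. split; [|split].
  - intros e He. unfold E' in He. apply in_app_iff in He.
    destruct He as [H|[H|[H|H]]].
    + assert (In e (E1 ++ (u,v)::E2)) by (apply in_or_app; auto). apply Hin in H0. simpl; tauto.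
    + subst e; simpl; tauto.
    + subst e; simpl; tauto.
    + assert (In e (E1 ++ (u,v)::E2)) by (apply in_or_app; simpl; auto). apply Hin in H0. simpl; tauto.
  - unfold E'. rewrite length_app in *. simpl in *. destruct V; [congruence|]. simpl in *. lia.
  - intros a b Ha Hb. apply reach_trans with u; auto. apply reach_sym; auto.
Qed.

Lemma chain N : forall V E1 E2 u v h, 0 < h -> is_tree V (E1 ++ (u,v)::E2) ->
  dist u v < (INR N + 1) * h ->
  exists V' F, is_tree V' (E1 ++ F ++ E2) /\ incl V V' /\ (length V' <= length V + N)%nat /\
    (forall e, In e F -> edge_len e <= h).
Proof.
  induction N as [|N IH]; intros V E1 E2 u v h Hh HT Hd.
  - exists V, [(u,v)]. split; [exact HT|]. split; [apply incl_refl|]. split; [lia|].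
    intros e [<-|[]]. unfold edge_len; simpl. simpl in Hd. lra.
  - destruct (Rlt_dec (dist u v) h) as [Hlt|Hge].
    { exists V, [(u,v)]. split; [exact HT|]. split; [apply incl_refl|]. split; [lia|].
      intros e [<-|[]]. unfold edge_len; simpl. lra. }
    set (d := dist u v) in *.
    assert (Hdpos : 0 < d) by lra.
    assert (Huv : u <> v).
    { intro E. subst d. rewrite E in Hdpos. unfold dist in Hdpos.
      replace ((fst v - fst v) ^ 2 + (snd v - snd v) ^ 2) with 0 in Hdpos by ring.
      rewrite sqrt_0 in Hdpos. lra. }
    rewrite S_INR in Hd. set (M := INR N + 1) in *.
    assert (HM : 0 < M) by (unfold M; pose proof (pos_INR N); lra).
    set (lo := Rmax 0 (1 - M*h/d)). set (hi := h/d).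
    assert (Hhi : hi <= 1) by (unfold hi; apply Rmult_le_reg_r with d; auto; field_simplify; lra).
    assert (Hlohi : lo < hi).
    { unfold lo, hi. apply Rmax_lub_lt.
      - apply Rdiv_lt_0_compat; lra.
      - apply Rmult_lt_reg_r with d; auto. field_simplify; lra. }
    destruct (avoid u v V Huv lo hi Hlohi) as [t [[Ht1 Ht2] Hp]].
    assert (Ht0 : 0 < t) by (pose proof (Rmax_l 0 (1 - M*h/d)); fold lo in H; lra).
    assert (Ht3 : 1 - M*h/d < t) by (pose proof (Rmax_r 0 (1 - M*h/d)); fold lo in H; lra).
    set (p := lerp u v t).
    pose proof (split_tree V E1 E2 u v p HT Hp) as HT'.
    assert (HT'' : is_tree (p::V) ((E1 ++ [(u,p)]) ++ (p,v)::E2)) by (rewrite <- app_assoc; exact HT').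
    assert (Hpv : dist p v < M * h).
    { unfold p. rewrite dist_lerp2. fold d. rewrite Rabs_right by lra.
      apply Rmult_lt_reg_r with (/d). apply Rinv_0_lt_compat; lra.
      replace ((1 - t) * d * / d) with (1 - t) by (field; lra).
      replace (M * h * / d) with (M * h / d) by reflexivity. lra. }
    destruct (IH (p::V) (E1 ++ [(u,p)]) E2 p v h Hh HT'' Hpv) as [V' [F [HT2 [Hinc [Hl Hed]]]]].
    exists V', ((u,p)::F). split.
    + replace (E1 ++ ((u,p)::F) ++ E2) with ((E1 ++ [(u,p)]) ++ F ++ E2) by (rewrite <- app_assoc; reflexivity). exact HT2.
    + split; [intros x Hx; apply Hinc; simpl; auto|]. split; [simpl in Hl; lia|].
      intros e [<-|He]; auto. unfold edge_len; simpl. unfold p. rewrite dist_lerp1. fold d.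
      rewrite Rabs_right by lra. unfold hi in Ht2.
      apply Rlt_le. apply Rmult_lt_reg_r with (/d) ; [apply Rinv_0_lt_compat; lra|].
      replace (t * d * /d) with t by (field; lra). exact Ht2.
Qed.

Lemma edge_len_nonneg e : 0 <= edge_len e.
Proof. unfold edge_len; apply pd_nonneg. Qed.

Lemma total_nonneg E : 0 <= total_length E.
Proof. induction E; unfold total_length in *; simpl. lra. pose proof (edge_len_nonneg a). lra. Qed.

Lemma total_app E F : total_length (E ++ F) = total_length E + total_length F.
Proof. induction E; unfold total_length in *; simpl. lra. rewrite IHE. lra. Qed.

Lemma max_nonneg E : 0 <= max_edge E.
Proof. induction E; unfold max_edge in *; simpl. lra. apply Rle_trans with (2 := Rmax_r _ _). auto. Qed.

Lemma max_le E h : 0 <= h -> (forall e, In e E -> edge_len e <= h) -> max_edge E <= h.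
Proof.
  intros Hh H. induction E; unfold max_edge in *; simpl. auto.
  apply Rmax_lub. apply H; simpl; auto. apply IHE. intros; apply H; simpl; auto.
Qed.

Lemma total_le_max E : total_length E <= INR (length E) * max_edge E.
Proof.
  induction E as [|a E IH]. unfold total_length, max_edge; simpl; lra.
  change (length (a::E)) with (S (length E)). rewrite S_INR.
  change (total_length (a::E)) with (edge_len a + total_length E).
  change (max_edge (a::E)) with (Rmax (edge_len a) (max_edge E)).
  pose proof (Rmax_l (edge_len a) (max_edge E)).
  pose proof (Rmax_r (edge_len a) (max_edge E)).
  pose proof (max_nonneg E). pose proof (pos_INR (length E)).
  assert (INR (length E) * max_edge E <= INR (length E) * Rmax (edge_len a) (max_edge E))
    by (apply Rmult_le_compat_l; lra).
  lra.
Qed.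

Lemma subdiv h : 0 < h -> forall Todo V Done, is_tree V (Done ++ Todo) ->
  (forall e, In e Done -> edge_len e <= h) ->
  exists V' E', is_tree V' E' /\ incl V V' /\
    INR (length V') <= INR (length V) + total_length Todo / h /\
    (forall e, In e E' -> edge_len e <= h).
Proof.
  intros Hh Todo. induction Todo as [|[u v] Todo IH]; intros V Done HT HD.
  - exists V, (Done ++ []). split; auto. split; [apply incl_refl|]. split.
    unfold total_length; simpl. unfold Rdiv. rewrite Rmult_0_l. lra.
    intros e He. rewrite app_nil_r in He. auto.
  - assert (Hx : 0 <= dist u v / h) by (unfold Rdiv; apply Rmult_le_pos; [apply pd_nonneg|left; apply Rinv_0_lt_compat; lra]).
    destruct (nat_floor _ Hx) as [N [HN1 HN2]].
    assert (Hd : dist u v < (INR N + 1) * h).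
    { apply Rmult_lt_reg_r with (/h). apply Rinv_0_lt_compat; lra.
      replace ((INR N + 1) * h * / h) with (INR N + 1) by (field; lra). exact HN2. }
    destruct (chain N V Done Todo u v h Hh HT Hd) as [V1 [F [HT1 [Hi1 [Hl1 HF]]]]].
    rewrite app_assoc in HT1.
    destruct (IH V1 (Done ++ F) HT1) as [V' [E' [HT' [Hi' [Hl' He']]]]].
    { intros e He. apply in_app_iff in He. destruct He; auto. }
    exists V', E'. split; auto. split; [eapply incl_tran; eauto|]. split; auto.
    apply le_INR in Hl1. rewrite plus_INR in Hl1.
    unfold total_length in *; simpl fold_right. unfold edge_len at 1; simpl fst; simpl snd.
    unfold Rdiv in *. rewrite Rmult_plus_distr_r. lra.
Qed.

Lemma reach_nil x y : reach [] x y -> x = y.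
Proof. intros H; induction H; auto. destruct H0 as [[]|[]]. Qed.

Lemma reach_cons_split a b E x y : reach ((a,b)::E) x y ->
  reach E x y \/ (reach E x a /\ reach E b y) \/ (reach E x b /\ reach E a y).
Proof.
  intros H. induction H as [u|u v w H IH Hin].
  - left; apply reach_refl.
  - destruct Hin as [[Hin|Hin]|[Hin|Hin]].
    + injection Hin as <- <-. destruct IH as [I|[[I1 I2]|[I1 I2]]].
      * right; left; split; auto; apply reach_refl.
      * left. eapply reach_trans; eauto. apply reach_sym; auto.
      * left; auto.
    + assert (reach E v w) by (apply reach_edge; auto).
      destruct IH as [I|[[I1 I2]|[I1 I2]]].
      * left; eapply reach_trans; eauto.
      * right; left; split; auto; eapply reach_trans; eauto.
      * right; right; split; auto; eapply reach_trans; eauto.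
    + injection Hin as <- <-. destruct IH as [I|[[I1 I2]|[I1 I2]]].
      * right; right; split; auto; apply reach_refl.
      * left; auto.
      * left. eapply reach_trans; eauto. apply reach_sym; auto.
    + assert (reach E v w) by (apply reach_edge; auto).
      destruct IH as [I|[[I1 I2]|[I1 I2]]].
      * left; eapply reach_trans; eauto.
      * right; left; split; auto; eapply reach_trans; eauto.
      * right; right; split; auto; eapply reach_trans; eauto.
Qed.

Definition inc (E : list (pt*pt)) x (e : pt*pt) : bool :=
  if excluded_middle_informative (reach E x (fst e)) then true else false.

Lemma reach_filter_in E x a : reach E x a -> reach (filter (inc E x) E) x a.
Proof.
  intros H. induction H as [u|u v w H IH Hin]. apply reach_refl.
  apply reach_step with v; auto. destruct Hin as [Hin|Hin].
  - left. apply filter_In. split; auto. unfold inc; simpl.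
    destruct (excluded_middle_informative (reach E u v)); tauto.
  - right. apply filter_In. split; auto. unfold inc; simpl.
    destruct (excluded_middle_informative (reach E u w)); auto.
    exfalso; apply n. apply reach_trans with v; auto. apply reach_edge; auto.
Qed.

Lemma reach_filter_out E x b y : reach E b y -> ~ reach E x b ->
  ~ reach E x y /\ reach (filter (fun e => negb (inc E x e)) E) b y.
Proof.
  intros H. induction H as [u|u v w H IH Hin]; intros Hb. split; auto; apply reach_refl.
  destruct (IH Hb) as [Hv Hr].
  assert (Hw : ~ reach E x w).
  { intro Hw. apply Hv. apply reach_trans with w; auto. apply reach_edge. tauto. }
  split; auto. apply reach_step with v; auto. destruct Hin as [Hin|Hin].
  - left. apply filter_In. split; auto. unfold inc; simpl.
    destruct (excluded_middle_informative (reach E x v)); tauto.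
  - right. apply filter_In. split; auto. unfold inc; simpl.
    destruct (excluded_middle_informative (reach E x w)); tauto.
Qed.

Lemma total_filter f E : total_length E =
  total_length (filter f E) + total_length (filter (fun e => negb (f e)) E).
Proof.
  induction E; unfold total_length in *; simpl. lra.
  destruct (f a); simpl; rewrite IHE; lra.
Qed.

Lemma reach_total_n n : forall E, (length E <= n)%nat -> forall x y, reach E x y ->
  dist x y <= total_length E.
Proof.
  induction n as [|n IHn]; intros E HE x y H.
  - destruct E; [|simpl in HE; lia]. apply reach_nil in H. subst.
    unfold dist. replace ((fst y - fst y) ^ 2 + (snd y - snd y) ^ 2) with 0 by ring.
    rewrite sqrt_0. unfold total_length; simpl; lra.
  - destruct E as [|[a b] E].
    { apply reach_nil in H. subst. unfold dist. replace ((fst y - fst y) ^ 2 + (snd y - snd y) ^ 2) with 0 by ring.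
      rewrite sqrt_0. unfold total_length; simpl; lra. }
    simpl in HE.
    assert (Htot : total_length ((a,b)::E) = dist a b + total_length E) by reflexivity.
    rewrite Htot.
    assert (Hpair : forall x p q y, reach E x p -> reach E q y -> ~ reach E x y ->
              dist x p + dist q y <= total_length E).
    { intros x0 p q y0 H1 H2 H3.
      assert (Hq : ~ reach E x0 q) by (intro; apply H3; eapply reach_trans; eauto).
      destruct (reach_filter_out E x0 q y0 H2 Hq) as [_ Hout].
      pose proof (reach_filter_in E x0 p H1) as Hin.
      rewrite (total_filter (inc E x0) E).
      apply Rplus_le_compat.
      - assert (HL := filter_length_le (inc E x0) E). apply (IHn (filter (inc E x0) E)); [lia|auto].
      - assert (HL := filter_length_le (fun e => negb (inc E x0 e)) E). apply (IHn (filter (fun e => negb (inc E x0 e)) E)); [lia|auto]. }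
    pose proof (pd_nonneg a b).
    destruct (classic (reach E x y)) as [Hr|Hnr].
    { pose proof (IHn E ltac:(lia) x y Hr). lra. }
    destruct (reach_cons_split a b E x y H) as [I|[[I1 I2]|[I1 I2]]].
    + contradiction.
    + pose proof (Hpair _ _ _ _ I1 I2 Hnr).
      pose proof (pd_tri x a y). pose proof (pd_tri a b y). lra.
    + pose proof (Hpair _ _ _ _ I1 I2 Hnr).
      pose proof (pd_tri x b y). pose proof (pd_tri b a y). rewrite (pd_sym b a) in *. lra.
Qed.

Lemma reach_total E x y : reach E x y -> dist x y <= total_length E.
Proof. apply (reach_total_n (length E)); auto. Qed.

Definition term (p : (pt*pt) * nat) : R := edge_len (fst p) / INR (snd p + 1).

Lemma fold_max_nonneg (l : list R) : 0 <= fold_right Rmax 0 l.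
Proof. induction l; simpl. lra. apply Rle_trans with (2 := Rmax_r _ _); auto. Qed.

Lemma fold_max_le (l : list R) B : 0 <= B -> (forall y, In y l -> y <= B) -> fold_right Rmax 0 l <= B.
Proof.
  intros HB H; induction l; simpl. auto. apply Rmax_lub. apply H; simpl; auto.
  apply IHl; intros; apply H; simpl; auto.
Qed.

Lemma fold_max_ge (l : list R) y : In y l -> y <= fold_right Rmax 0 l.
Proof.
  induction l; simpl. tauto. intros [<-|H]. apply Rmax_l.
  apply Rle_trans with (2 := Rmax_r _ _); auto.
Qed.

Lemma INR_S1 n : INR (n + 1) = INR n + 1.
Proof. rewrite plus_INR; simpl; ring. Qed.

Lemma msth_lower_aux E ns : length ns = length E ->
  total_length E <= fold_right Rmax 0 (map term (combine E ns)) * (INR (list_sum ns) + INR (length E)).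
Proof.
  revert ns. induction E as [|e E IH]; intros ns Hl.
  - unfold total_length; simpl. destruct ns; simpl; lra.
  - destruct ns as [|n0 ns]; [simpl in Hl; lia|]. simpl in Hl. injection Hl as Hl.
    specialize (IH ns Hl).
    change (total_length (e::E)) with (edge_len e + total_length E).
    simpl combine. simpl map. simpl fold_right. simpl list_sum. simpl length.
    set (M := fold_right Rmax 0 (map term (combine E ns))) in *.
    set (t0 := term (e, n0)).
    pose proof (Rmax_l t0 M). pose proof (Rmax_r t0 M).
    assert (Hpos : 0 < INR n0 + 1) by (pose proof (pos_INR n0); lra).
    assert (He : edge_len e = t0 * (INR n0 + 1)).
    { unfold t0, term; simpl. rewrite INR_S1. field. lra. }
    rewrite plus_INR, S_INR.
    pose proof (pos_INR (list_sum ns)). pose proof (pos_INR (length E)).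
    assert (M * (INR (list_sum ns) + INR (length E)) <= Rmax t0 M * (INR (list_sum ns) + INR (length E)))
      by (apply Rmult_le_compat_r; lra).
    assert (t0 * (INR n0 + 1) <= Rmax t0 M * (INR n0 + 1)) by (apply Rmult_le_compat_r; lra).
    lra.
Qed.

Lemma ns_construct E c : 0 < c -> exists ns, length ns = length E /\
  INR (list_sum ns) <= c * total_length E /\
  (forall p, In p (combine E ns) -> term p <= / c).
Proof.
  intros Hc. induction E as [|e E IH].
  - exists []. simpl. unfold total_length; simpl. split; auto. split; [lra|tauto].
  - destruct IH as [ns [H1 [H2 H3]]].
    assert (Hx : 0 <= c * edge_len e) by (apply Rmult_le_pos; [lra|apply edge_len_nonneg]).
    destruct (nat_floor _ Hx) as [n0 [Hn1 Hn2]].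
    exists (n0 :: ns). split; [simpl; lia|]. split.
    + simpl list_sum. rewrite plus_INR. change (total_length (e::E)) with (edge_len e + total_length E). lra.
    + intros p [<-|Hp]; auto. unfold term; simpl. rewrite INR_S1.
      assert (Hpos : 0 < INR n0 + 1) by (pose proof (pos_INR n0); lra).
      apply Rmult_le_reg_r with (INR n0 + 1); auto.
      replace (edge_len e / (INR n0 + 1) * (INR n0 + 1)) with (edge_len e) by (field; lra).
      apply Rmult_le_reg_l with c; auto.
      replace (c * (/ c * (INR n0 + 1))) with (INR n0 + 1) by (field; lra). lra.
Qed.

Lemma msth_set_nonneg E k r :
  (exists ns : list nat, length ns = length E /\ list_sum ns = k /\
     r = fold_right Rmax 0 (map (fun p => edge_len (fst p) / INR (snd p + 1)) (combine E ns))) -> 0 <= r.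
Proof. intros [ns [_ [_ ->]]]. apply fold_max_nonneg. Qed.

Lemma msth_upper E k : E <> [] -> (1 <= k)%nat -> 0 < total_length E ->
  exists ns : list nat, length ns = length E /\ list_sum ns = k /\
     fold_right Rmax 0 (map (fun p => edge_len (fst p) / INR (snd p + 1)) (combine E ns))
       <= total_length E / INR k.
Proof.
  intros HE Hk HL.
  assert (HK : 0 < INR k) by (apply lt_0_INR; lia).
  set (c := INR k / total_length E).
  assert (Hc : 0 < c) by (unfold c; apply Rdiv_lt_0_compat; auto).
  destruct (ns_construct E c Hc) as [ns [H1 [H2 H3]]].
  assert (Hsum : (list_sum ns <= k)%nat).
  { apply INR_le. replace (INR k) with (c * total_length E) by (unfold c; field; lra). auto. }
  destruct E as [|e E]; [congruence|]. destruct ns as [|n0 ns]; [simpl in H1; lia|].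
  exists ((n0 + (k - list_sum (n0::ns)))%nat :: ns). split; [simpl in *; lia|]. split.
  { simpl in *. lia. }
  assert (Hic : / c = total_length (e::E) / INR k) by (unfold c; field; lra).
  rewrite <- Hic. apply fold_max_le. left; apply Rinv_0_lt_compat; auto.
  intros y Hy. apply in_map_iff in Hy. destruct Hy as [p [<- Hp]].
  simpl in Hp. destruct Hp as [<-|Hp].
  - simpl. apply Rle_trans with (term (e, n0)). 2: apply H3; simpl; auto.
    unfold term; simpl. rewrite !INR_S1. unfold Rdiv. apply Rmult_le_compat_l. apply edge_len_nonneg.
    apply Rinv_le_contravar. pose proof (pos_INR n0); lra. rewrite plus_INR. pose proof (pos_INR (k - (n0 + list_sum ns))); lra.
  - apply (H3 p). simpl; auto.
Qed.

Lemma Rdiv_le_0_compat a b : 0 <= a -> 0 < b -> 0 <= a / b.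
Proof. intros; unfold Rdiv; apply Rmult_le_pos; auto. left; apply Rinv_0_lt_compat; auto. Qed.

Lemma squeeze (u : nat -> R) T : 0 < T ->
  (exists C, 0 <= C /\ forall k, (1 <= k)%nat -> u k <= T + C / INR k) ->
  (forall a, 0 < a -> exists m D, 0 <= D /\ forall k, (m <= k)%nat -> (1 <= k)%nat -> T*(1-a) - D / INR k <= u k) ->
  Un_cv (fun n => u (S n)) T.
Proof.
  intros HT [C [HC HU]] HL eps Heps.
  destruct (HL (eps/(2*T))) as [m [D [HD HL']]].
  { apply Rdiv_lt_0_compat; lra. }
  assert (Hx : 0 <= 2*(C+D)/eps) by (apply Rdiv_le_0_compat; lra).
  destruct (nat_floor _ Hx) as [N0 [_ HN0]].
  exists (Nat.max m N0). intros n Hn. unfold R_dist. cbv beta.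
  set (k := S n). assert (Hk1 : (1 <= k)%nat) by (unfold k; lia).
  assert (HK : INR N0 + 1 <= INR k).
  { unfold k. rewrite S_INR. apply Rplus_le_compat_r, le_INR. lia. }
  assert (HKp : 0 < INR k) by (pose proof (pos_INR N0); lra).
  assert (HCD : C / INR k + D / INR k < eps / 2).
  { replace (C / INR k + D / INR k) with ((C+D) / INR k) by (field; lra).
    apply Rmult_lt_reg_r with (INR k); auto.
    replace ((C+D) / INR k * INR k) with (C+D) by (field; lra).
    assert (2*(C+D)/eps < INR k) by lra.
    apply Rmult_lt_compat_r with (r := eps/2) in H; [|lra].
    replace (2 * (C + D) / eps * (eps / 2)) with (C+D) in H by (field; lra). lra. }
  assert (H0C : 0 <= C / INR k) by (apply Rdiv_le_0_compat; lra).
  assert (H0D : 0 <= D / INR k) by (apply Rdiv_le_0_compat; lra).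
  pose proof (HU k Hk1). pose proof (HL' k ltac:(unfold k; lia) Hk1).
  replace (T * (1 - eps / (2 * T))) with (T - eps/2) in H0 by (field; lra).
  apply Rabs_def1; lra.
Qed.

Lemma lower_real Lm Ls a K n m W : 0 < Lm -> 0 < Ls -> 0 < a -> 1 <= K -> 2 <= n -> 0 <= m ->
  W = K + n - m -> 0 < W ->
  (Lm/Ls)*(1-a) - (Lm/Ls)*m/K <= Lm/(K+n-1) * W / (Ls + a*Ls).
Proof.
  intros HLm HLs Ha HK Hn Hm HW HW0.
  assert (HaL : 0 < a*Ls) by (apply Rmult_lt_0_compat; auto).
  set (T := Lm/Ls). assert (HT : 0 < T) by (unfold T; apply Rdiv_lt_0_compat; auto).
  set (s := 1/(1+a)). set (rho := W/(K+n-1)).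
  assert (Heq : Lm/(K+n-1) * W / (Ls + a*Ls) = T * s * rho) by (unfold T, s, rho; field; repeat split; lra).
  rewrite Heq.
  assert (Hs1 : 1 - a <= s).
  { unfold s. apply Rmult_le_reg_r with (1+a); [lra|].
    replace (1/(1+a)*(1+a)) with 1 by (field; lra). assert (0 <= a*a) by (apply Rle_0_sqr). lra. }
  assert (Hs2 : s <= 1).
  { unfold s. apply Rmult_le_reg_r with (1+a); [lra|]. replace (1/(1+a)*(1+a)) with 1 by (field; lra). lra. }
  assert (Hs0 : 0 < s) by (unfold s; apply Rdiv_lt_0_compat; lra).
  assert (Hrho : 1 - m/K <= rho).
  { unfold rho. rewrite HW. apply Rmult_le_reg_r with (K*(K+n-1)); [apply Rmult_lt_0_compat; lra|].
    replace ((1 - m/K) * (K*(K+n-1))) with ((K-m)*(K+n-1)) by (field; lra).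
    replace ((K + n - m) / (K + n - 1) * (K * (K + n - 1))) with ((K+n-m)*K) by (field; lra).
    assert (0 <= m*(n-1)) by (apply Rmult_le_pos; lra). nra. }
  assert (HTs : 0 < T*s) by (apply Rmult_lt_0_compat; auto).
  assert (T*s*(1 - m/K) <= T*s*rho) by (apply Rmult_le_compat_l; lra).
  assert (Hmk : 0 <= m/K) by (apply Rdiv_le_0_compat; lra).
  assert (T*s*(m/K) <= T*(m/K)).
  { apply Rmult_le_compat_r; auto. assert (T*s <= T*1) by (apply Rmult_le_compat_l; lra). lra. }
  assert (T*(1-a) <= T*s) by (apply Rmult_le_compat_l; lra).
  replace (T*m/K) with (T*(m/K)) by (field; lra).
  replace (T*s*(1 - m/K)) with (T*s - T*s*(m/K)) in H by ring.
  lra.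
Qed.

Lemma LMST_eq X E : is_MST X E -> L_MST X = total_length E.
Proof.
  intros [HT Hmin]. unfold L_MST. apply Rle_antisym.
  - apply Rinf_le. intros x [E' [_ ->]]. apply total_nonneg. eauto.
  - apply Rinf_ge. eauto. intros x [E' [_ ->]]. apply total_nonneg.
    intros x [E' [H ->]]. auto.
Qed.

Lemma SMT_nonneg X r : (exists V E, is_tree V E /\ incl X V /\ r = total_length E) -> 0 <= r.
Proof. intros [V [E' [_ [_ ->]]]]. apply total_nonneg. Qed.

Lemma LSMT_le X E : is_tree X E -> L_SMT X <= total_length E.
Proof. intros HT. apply Rinf_le. apply SMT_nonneg. exists X, E. split; auto. split; auto. apply incl_refl. Qed.

Lemma LSMT_pos X E : NoDup X -> (2 <= length X)%nat -> is_tree X E -> 0 < L_SMT X.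
Proof.
  intros ND Hl HT. destruct X as [|x0 [|x1 X]]; simpl in Hl; try lia.
  assert (Hne : x0 <> x1) by (inversion ND as [|a l Hni HND]; intro Heq; apply Hni; left; auto).
  pose proof (pd_pos _ _ Hne).
  apply Rlt_le_trans with (dist x0 x1); auto. apply Rinf_ge.
  - exists (total_length E), (x0::x1::X), E. split; auto. split; auto. apply incl_refl.
  - apply SMT_nonneg.
  - intros r [V [E' [[_ [_ [_ [_ Hc]]]] [Hinc ->]]]]. apply reach_total. apply Hc; apply Hinc; simpl; auto.
Qed.

Lemma opt_nonneg X k r : (exists V E, in_C X k V E /\ r = max_edge E) -> 0 <= r.
Proof. intros [V [E' [_ ->]]]. apply max_nonneg. Qed.

Lemma opt_ne X E k : is_tree X E -> exists r, exists V E, in_C X k V E /\ r = max_edge E.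
Proof. intros HT. exists (max_edge E), X, E. split; auto. split; auto. split. apply incl_refl. apply Nat.le_add_r. Qed.

Lemma opt_lower X E k : is_tree X E -> (1 <= k)%nat ->
  L_SMT X / INR (length X + k - 1) <= ell_opt X k.
Proof.
  intros HT Hk. assert (Hx : (1 <= length X)%nat) by (destruct HT as [_ [NE _]]; destruct X; [congruence|simpl; lia]).
  assert (HD : 0 < INR (length X + k - 1)) by (apply lt_0_INR; lia).
  unfold ell_opt. apply Rinf_ge. apply (opt_ne X E k HT). apply opt_nonneg.
  intros r [V [E' [[HT' [Hinc Hlen]] ->]]].
  assert (L_SMT X <= total_length E').
  { apply Rinf_le. apply SMT_nonneg. exists V, E'. auto. }
  pose proof (total_le_max E').
  destruct HT' as [_ [_ [_ [HlE _]]]].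
  assert (INR (length E') <= INR (length X + k - 1)) by (apply le_INR; lia).
  pose proof (max_nonneg E').
  assert (INR (length E') * max_edge E' <= INR (length X + k - 1) * max_edge E')
    by (apply Rmult_le_compat_r; auto).
  apply Rmult_le_reg_r with (INR (length X + k - 1)); auto.
  replace (L_SMT X / INR (length X + k - 1) * INR (length X + k - 1)) with (L_SMT X) by (field; lra).
  lra.
Qed.

Lemma opt_upper X E eps : is_tree X E -> (1 <= length X)%nat -> 0 < eps ->
  exists m : nat, forall k, (m <= k)%nat ->
    ell_opt X k <= (L_SMT X + eps) / INR (k + length X - m).
Proof.
  intros HT Hn He.
  assert (HS0 : 0 <= L_SMT X).
  { apply Rinf_ge. exists (total_length E), X, E. split; auto. split; auto. apply incl_refl.
    apply SMT_nonneg. apply SMT_nonneg. }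
  destruct (Rinf_approx _ eps (ex_intro _ (total_length E) (ex_intro _ X (ex_intro _ E (conj HT (conj (incl_refl X) eq_refl)))))
     (SMT_nonneg X) He) as [L [[V0 [E0 [HT0 [Hinc0 ->]]]] HL]].
  fold (L_SMT X) in HL.
  exists (length V0). intros k Hk.
  set (W := INR (k + length X - length V0)).
  assert (HW : 0 < W) by (apply lt_0_INR; lia).
  set (h := (L_SMT X + eps) / W).
  assert (Hh : 0 < h) by (apply Rdiv_lt_0_compat; lra).
  destruct (subdiv h Hh E0 V0 [] HT0 ltac:(simpl; tauto)) as [V' [E' [HT' [Hinc' [Hl' He']]]]].
  assert (total_length E0 / h < W).
  { apply Rmult_lt_reg_r with h; auto. replace (total_length E0 / h * h) with (total_length E0) by (field; lra).
    unfold h. replace (W * ((L_SMT X + eps) / W)) with (L_SMT X + eps) by (field; lra). lra. }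
  assert (Hcount : INR (length V') < INR (length X + k)).
  { replace (INR (length X + k)) with (INR (length V0) + W).
    lra. unfold W. rewrite <- plus_INR. f_equal. lia. }
  apply INR_lt in Hcount.
  apply Rle_trans with (max_edge E').
  - unfold ell_opt. apply Rinf_le. apply opt_nonneg. exists V', E'. split; auto.
    split; auto. split. eapply incl_tran; eauto. lia.
  - apply max_le; auto. lra.
Qed.

Lemma msth_lower E k : E <> [] -> (1 <= k)%nat -> 0 < total_length E ->
  total_length E / (INR k + INR (length E)) <= ell_msth E k.
Proof.
  intros HE Hk HL. assert (HK : 0 < INR k) by (apply lt_0_INR; lia).
  pose proof (pos_INR (length E)).
  unfold ell_msth. apply Rinf_ge.
  - destruct (msth_upper E k HE Hk HL) as [ns [H1 [H2 _]]]. eauto.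
  - intros r Hr. eapply msth_set_nonneg; eauto.
  - intros r [ns [H1 [H2 ->]]]. pose proof (msth_lower_aux E ns H1) as Hm.
    unfold term in Hm. rewrite H2 in Hm.
    apply Rmult_le_reg_r with (INR k + INR (length E)); [lra|].
    replace (total_length E / (INR k + INR (length E)) * (INR k + INR (length E))) with (total_length E) by (field; lra).
    exact Hm.
Qed.

Lemma msth_up E k : E <> [] -> (1 <= k)%nat -> 0 < total_length E ->
  ell_msth E k <= total_length E / INR k.
Proof.
  intros HE Hk HL. destruct (msth_upper E k HE Hk HL) as [ns [H1 [H2 H3]]].
  eapply Rle_trans; [|exact H3]. unfold ell_msth. apply Rinf_le.
  intros r Hr; eapply msth_set_nonneg; eauto. exists ns; auto.
Qed.

Theorem lemma2 (X : list pt) (E : list (pt * pt)) :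
  NoDup X -> (2 <= length X)%nat -> is_MST X E ->
  Un_cv (fun n => ell_msth E (S n) / ell_opt X (S n)) (L_MST X / L_SMT X).
Proof.
  intros ND Hn HM.
  rewrite (LMST_eq X E HM). pose proof HM as [HT _].
  set (Lm := total_length E). set (Ls := L_SMT X). set (n := length X) in *.
  assert (HLs : 0 < Ls) by (apply (LSMT_pos X E); auto).
  assert (HLm : Ls <= Lm) by (apply LSMT_le; auto).
  assert (HLmp : 0 < Lm) by lra.
  assert (HlenE : length E = (n - 1)%nat) by (destruct HT as [_ [_ [_ [H _]]]]; exact H).
  assert (HEne : E <> []) by (intro; subst; simpl in HlenE; lia).
  assert (Hn2 : 2 <= INR n) by (replace 2 with (INR 2) by (simpl; ring); apply le_INR; auto).
  set (T := Lm / Ls).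
  assert (HT0 : 0 < T) by (apply Rdiv_lt_0_compat; auto).
  apply (squeeze (fun k => ell_msth E k / ell_opt X k) T HT0).
  - exists (T * (INR n - 1)). split. apply Rmult_le_pos; lra.
    intros k Hk. cbv beta.
    assert (HK : 1 <= INR k) by (replace 1 with (INR 1) by reflexivity; apply le_INR; auto).
    pose proof (msth_up E k HEne Hk HLmp) as HA.
    pose proof (opt_lower X E k HT Hk) as HB. fold n Ls in HB.
    assert (HD : INR (n + k - 1) = INR n + INR k - 1).
    { rewrite minus_INR by lia. rewrite plus_INR. simpl. ring. }
    rewrite HD in HB.
    assert (HB0 : 0 < Ls / (INR n + INR k - 1)) by (apply Rdiv_lt_0_compat; lra).
    assert (HA0 : 0 <= ell_msth E k).
    { unfold ell_msth. apply Rinf_ge. destruct (msth_upper E k HEne Hk HLmp) as [ns [H1 [H2 _]]]; eauto.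
      intros r Hr; eapply msth_set_nonneg; eauto. intros r Hr; eapply msth_set_nonneg; eauto. }
    apply Rle_trans with ((Lm / INR k) / (Ls / (INR n + INR k - 1))).
    + unfold Rdiv at 1 3. apply Rmult_le_compat; auto.
      left; apply Rinv_0_lt_compat; lra.
      apply Rinv_le_contravar; auto.
    + right. unfold T. field. repeat split; lra.
  - intros a Ha.
    destruct (opt_upper X E (a * Ls) HT ltac:(fold n; lia) ltac:(apply Rmult_lt_0_compat; auto)) as [m Hm].
    exists m, (T * INR m). split. apply Rmult_le_pos; [lra|apply pos_INR].
    intros k Hmk Hk. cbv beta.
    assert (HK : 1 <= INR k) by (replace 1 with (INR 1) by reflexivity; apply le_INR; auto).
    pose proof (msth_lower E k HEne Hk HLmp) as HA. fold Lm in HA. rewrite HlenE in HA.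
    rewrite minus_INR in HA by lia. simpl INR in HA at 2.
    specialize (Hm k Hmk). fold n Ls in Hm.
    set (W := INR (k + n - m)) in *.
    assert (HW : W = INR k + INR n - INR m) by (unfold W; rewrite minus_INR by lia; rewrite plus_INR; ring).
    assert (HW0 : 0 < W) by (unfold W; apply lt_0_INR; lia).
    assert (HB0 : 0 < ell_opt X k).
    { eapply Rlt_le_trans; [|apply (opt_lower X E k HT Hk)]. apply Rdiv_lt_0_compat; auto. apply lt_0_INR; lia. }
    assert (HAp : 0 < Lm / (INR k + (INR n - 1))) by (apply Rdiv_lt_0_compat; lra).
    pose proof (lower_real Lm Ls a (INR k) (INR n) (INR m) W HLmp HLs Ha HK Hn2 (pos_INR m) HW HW0) as HR.
    fold T in HR. replace (T * INR m / INR k) with (T * INR m / INR k) in HR by reflexivity.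
    eapply Rle_trans; [exact HR|].
    replace (Lm / (INR k + INR n - 1) * W / (Ls + a * Ls)) with
      ((Lm / (INR k + (INR n - 1))) / ((Ls + a*Ls) / W)) by (field; repeat split; try lra; nra).
    unfold Rdiv at 1 3. apply Rmult_le_compat; auto.
    + left; auto.
    + left; apply Rinv_0_lt_compat. apply Rdiv_lt_0_compat; auto. pose proof (Rmult_lt_0_compat _ _ Ha HLs). lra.
    + apply Rinv_le_contravar; auto.
Qed.
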